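(* Let $\pi = (X_1, \ldots, X_m)$ be a modular organisation. Then for all $1 \le i \le j \le m$, the sequence $(X_1, \ldots, X_{i-1}, \bigcup_{k=i}^{j} X_k, X_{j+1}, \ldots, X_m)$ is a modular organisation.
   Context: Let $A$ be a finite set of agents. For each $a \in A$ let $S_a$ be a nonempty finite set, and let $S = \prod_{a \in A} S_a$ be the set of states. For each $a \in A$ let $\to_a \subseteq S \times S$ be a relation that is either empty or left-total, such that whenever $s \to_a s'$, either $s = s'$ or $s$ and $s'$ differ only in the $a$-component. For $X \subseteq A$ let $\to_X = \bigcup_{a \in X} \to_a$ (so $\to_\emptyset$ is empty) and $\to_X^*$ its reflexive-transitive closure; for $T \subseteq S$, $(T \to_X) = \{ t' : \exists t \in T,\ t \to_X t'\}$. Orbit operator: $\Omega_X(S') = \{ s' : \exists s \in S',\ s \to_X^* s'\}$. Equilibria operator: $\Psi_X(S') = \{ s \in \Omega_X(S') : \forall s' \in S,\ s \to_X^* s' \implies s' \to_X^* s \}$. $M$-relation: for $X, Y \subseteq A$, $X \leadsto Y$ iff for every $S' \subseteq S$, with $T = \Psi_X(\Psi_{X \cup Y}(S'))$, one has $(T \to_Y) \subseteq T$. A modular organisation is an ordered partition $(X_1, \ldots, X_m)$ of $A$ (a sequence of nonempty pairwise disjoint subsets whose union is $A$) such that for all $1 \le i \le m$, $\left(\bigcup_{j=1}^{i-1} X_j\right) \leadsto X_i$ (the empty union being $\emptyset$). *)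

(* Defs.v *)
From mathcomp Require Import all_boot.
From Stdlib Require Import Relations.Relation_Operators.
Set Implicit Arguments. Unset Strict Implicit. Unset Printing Implicit Defensive.

Section Modular.
Variable A : finType.
Variable S : A -> finType.
Definition state := {dffun forall a : A, S a}.
Variable step : A -> state -> state -> Prop.

Definition well_formed_system : Prop :=
  (forall a : A, exists x : S a, True) /\
  (forall a : A,
     (forall s s' : state, ~ step a s s') \/
     (forall s : state, exists s', step a s s')) /\
  (forall (a : A) (s s' : state), step a s s' ->
     s = s' \/ (forall b : A, b != a -> s b = s' b)).

Definition stepX (X : {set A}) (s s' : state) : Prop :=
  exists2 a, a \in X & step a s s'.

Definition reachX (X : {set A}) : state -> state -> Prop :=
  clos_refl_trans state (stepX X).

Definition Omega (X : {set A}) (S' : state -> Prop) : state -> Prop :=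
  fun s' => exists2 s, S' s & reachX X s s'.

Definition Psi (X : {set A}) (S' : state -> Prop) : state -> Prop :=
  fun s => Omega X S' s /\ (forall s', reachX X s s' -> reachX X s' s).

Definition Mrel (X Y : {set A}) : Prop :=
  forall S' : state -> Prop,
    let T := Psi X (Psi (X :|: Y) S') in
    forall t t', T t -> stepX Y t t' -> T t'.

(* Modular organisation (X_1,...,X_m), 0-indexed as a sequence *)
Definition modular_org (p : seq {set A}) : Prop :=
  (forall i, i < size p -> nth set0 p i != set0) /\
  (forall i j, i < j -> j < size p -> nth set0 p i :&: nth set0 p j = set0) /\
  \bigcup_(X <- p) X = [set: A] /\
  (forall i, i < size p ->
     Mrel (\bigcup_(X <- take i p) X) (nth set0 p i)).
End Modular.

(* Merge blocks i..j (0-indexed, i <= j) into their union. *)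
Definition merge_blocks (A : finType) (p : seq {set A}) (i j : nat) : seq {set A} :=
  take i p ++ [:: \bigcup_(X <- take (j - i).+1 (drop i p)) X] ++ drop j.+1 p.

(* Main.v *)
Require Import Defs.
From mathcomp Require Import all_boot zify.
Set Implicit Arguments. Unset Strict Implicit. Unset Printing Implicit Defensive.
Set Warnings "-notation-overridden".
From Stdlib Require Import Relations.Relation_Operators ClassicalEpsilon Classical.
Section Dyn.
Variable A : finType.
Variable S : A -> finType.
Variable step : A -> state S -> state S -> Prop.

Definition eqX (X : {set A}) (s : state S) :=
  forall s', reachX step X s s' -> reachX step X s' s.

Lemma reach_trans (X : {set A}) a b c : reachX step X a b -> reachX step X b c -> reachX step X a c.
Proof. move=> h1 h2; exact: rt_trans h1 h2. Qed.

Lemma reach_mono (X Y : {set A}) a b : X \subset Y -> reachX step X a b -> reachX step Y a b.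
Proof.
move=> sXY; elim=> [x y [c cX st]||x y z _ h1 _ h2].
- apply: rt_step; exists c => //; exact: (subsetP sXY).
- exact: rt_refl.
- exact: rt_trans h1 h2.
Qed.

Definition rset (X : {set A}) (u : state S) : {set state S} :=
  [set w | is_left (excluded_middle_informative (reachX step X u w))].

Lemma in_rset (X : {set A}) u w : (w \in rset X u) <-> reachX step X u w.
Proof.
rewrite inE; case: excluded_middle_informative => /= h; split => //.
Qed.

Lemma exists_eq (X : {set A}) u : exists v, reachX step X u v /\ eqX X v.
Proof.
move: {2}#|rset X u| (leqnn #|rset X u|) => n.
elim: n u => [|n IH] u Hn.
- have h0 : 0 < #|rset X u| by apply/card_gt0P; exists u; apply/in_rset; exact: rt_refl.
  by rewrite ltnNge Hn in h0.
- case: (classic (eqX X u)) => [h|h].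
  + exists u; split => //; exact: rt_refl.
  + have [w [hw nw]] : exists w, reachX step X u w /\ ~ reachX step X w u.
      apply: NNPP => hn; apply: h => w hw; apply: NNPP => nw; apply: hn; by exists w.
    have sub : rset X w \proper rset X u.
      apply/properP; split.
      * apply/subsetP => z /in_rset hz; apply/in_rset; exact: reach_trans hw hz.
      * exists u; first by apply/in_rset; exact: rt_refl.
        by apply/negP => /in_rset.
    have [v [hv ev]] := IH w (leq_trans (proper_card sub) Hn).
    exists v; split => //; exact: reach_trans hw hv.
Qed.

Lemma reach_ind (W : {set A}) (T : state S -> Prop) a b :
  (forall t t', T t -> stepX step W t t' -> T t') -> reachX step W a b -> T a -> T b.
Proof.
move=> H; elim=> [x y st|x|x y z _ h1 _ h2] //.
- move=> Tx; exact: H st.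
- by move=> Tx; apply: h2; apply: h1.
Qed.

Lemma Psi_closed (W : {set A}) S' s u :
  Psi step W S' s -> reachX step W s u -> Psi step W S' u.
Proof.
move=> [[s0 h0 r0] e] r; split.
- exists s0 => //; exact: reach_trans r0 r.
- move=> w rw; apply: reach_trans (e w (reach_trans r rw)) r.
Qed.

Lemma eqX_step (X : {set A}) t u : eqX X t -> reachX step X t u -> eqX X u.
Proof. move=> e r w rw; exact: reach_trans (e w (reach_trans r rw)) r. Qed.

Lemma Mrel_char (X Y : {set A}) :
  Mrel step X Y <-> forall s, eqX (X :|: Y) s -> eqX X s.
Proof.
split.
- move=> HM s es.
  pose F := Psi step (X :|: Y) (fun u => u = s).
  have Fs : F s by split => //; exists s => //; exact: rt_refl.
  have [v [rv ev]] := exists_eq X s.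
  pose T := Psi step X F.
  have Tv : T v by split => //; exists s.
  have Tcl : forall t t', T t -> stepX step (X :|: Y) t t' -> T t'.
    move=> t t' Tt [a]; rewrite in_setU => /orP [aX|aY] st.
    + have r : reachX step X t t' by apply: rt_step; exists a.
      case: Tt => [[s0 h0 r0] e]; split; first by exists s0 => //; exact: reach_trans r0 r.
      exact: eqX_step e r.
    + by apply: (HM (fun u => u = s) t t' Tt); exists a.
  have rvs : reachX step (X :|: Y) v s by apply: es; apply: reach_mono rv; exact: subsetUl.
  by case: (reach_ind Tcl rvs Tv).
- move=> H S' /= t t' [[s0 h0 r0] e] st.
  have Ft : Psi step (X :|: Y) S' t.
    apply: Psi_closed h0 _; apply: reach_mono r0; exact: subsetUl.
  have Ft' : Psi step (X :|: Y) S' t'.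
    apply: Psi_closed Ft _; case: st => a aY sa; apply: rt_step; exists a => //.
    by rewrite in_setU aY orbT.
  split; first by exists t' => //; exact: rt_refl.
  by apply: H; case: Ft'.
Qed.

Lemma Mrel_comb (X Y1 Y2 : {set A}) :
  Mrel step X Y1 -> Mrel step (X :|: Y1) Y2 -> Mrel step X (Y1 :|: Y2).
Proof.
move=> /Mrel_char h1 /Mrel_char h2; apply/Mrel_char => s e.
apply: h1; apply: h2; by rewrite -setUA.
Qed.
End Dyn.
Section Comb.
Variable A : finType.
Notation U s := (\bigcup_(X <- s) X).

Lemma U_cat (s1 s2 : seq {set A}) : U (s1 ++ s2) = U s1 :|: U s2.
Proof. by rewrite big_cat. Qed.

Lemma U_cons (x : {set A}) s : U (x :: s) = x :|: U s.
Proof. by rewrite big_cons. Qed.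

Lemma U_mem x (s : seq {set A}) : x \in U s -> exists2 n, n < size s & x \in nth set0 s n.
Proof.
rewrite bigcup_seq => /bigcupP [X Xs xX].
have [n ns hn] := (nthP set0) Xs. by exists n => //; rewrite hn.
Qed.

Variables (p : seq {set A}) (i j : nat).
Hypotheses (Hij : i <= j) (Hj : j < size p).
Let Y := U (take (j - i).+1 (drop i p)).

Lemma size_merge : size (merge_blocks p i j) = i + (size p - j).
Proof. rewrite /merge_blocks size_cat /= size_takel ?size_drop; lia. Qed.

Lemma nth_merge k : nth set0 (merge_blocks p i j) k =
  if k < i then nth set0 p k else if k == i then Y else nth set0 p (k + (j - i)).
Proof.
rewrite /merge_blocks nth_cat size_takel; last lia.
case: ltnP => hk; first by rewrite nth_take.
case: eqP => [->|hne]; first by rewrite subnn.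
have -> : k - i = (k - i - 1).+1 by lia.
rewrite /= nth_drop; congr nth; lia.
Qed.

Lemma Y_mem x : x \in Y -> exists2 m, i <= m <= j & x \in nth set0 p m.
Proof.
move/U_mem => [n]; rewrite size_takel ?size_drop; last lia.
move=> hn; rewrite nth_take // nth_drop => hx; exists (i + n) => //; lia.
Qed.

Lemma Y_sup : nth set0 p i \subset Y.
Proof.
rewrite /Y (drop_nth set0); last lia.
by rewrite /= U_cons subsetUl.
Qed.
Lemma merged_Mrel (S : A -> finType) (step : A -> state S -> state S -> Prop) d :
  i + d < size p ->
  (forall k, k < size p -> Mrel step (U (take k p)) (nth set0 p k)) ->
  Mrel step (U (take i p)) (U (take d.+1 (drop i p))).
Proof.
move=> hd H4; elim: d hd => [|d IH] hd.
  rewrite (drop_nth set0); last lia.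
  by rewrite /= take0 U_cons big_nil setU0; apply: H4; lia.
have -> : d.+2 = d.+1 + 1 by lia.
rewrite takeD drop_drop U_cat (drop_nth set0 (n := d.+1 + i)); last by lia.
rewrite /= take0 U_cons big_nil setU0.
apply: Mrel_comb; first by apply: IH; lia.
rewrite -U_cat -takeD (addnC d.+1 i); apply: H4; lia.
Qed.
End Comb.

Theorem proposition3 (A : finType) (S : A -> finType)
    (step : A -> state S -> state S -> Prop)
    (Hsys : well_formed_system step)
    (p : seq {set A}) (Hp : modular_org step p)
    (i j : nat) (Hij : i <= j) (Hj : j < size p) :
  modular_org step (merge_blocks p i j).
Proof.
case: Hp => [H1 [H2 [H3 H4]]].
have G : forall k x, k < size (merge_blocks p i j) -> x \in nth set0 (merge_blocks p i j) k ->
   exists m, [/\ m < size p, x \in nth set0 p m & 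
     (k < i -> m = k) /\ (k = i -> i <= m <= j) /\ (i < k -> m = k + (j - i))].
  move=> k x; rewrite size_merge // nth_merge // => hk.
  case: ltnP => hki; first by move=> hx; exists k; split => //; lia.
  case: eqP => [->|hne].
    move/(Y_mem Hij Hj) => [m hm hx]; exists m; by split => //; lia.
  move=> hx; exists (k + (j - i)); split => //; lia.
split; [|split; [|split]].
- move=> k hk; rewrite nth_merge //.
  move: hk; rewrite size_merge // => hk.
  case: ltnP => hki; first by apply: H1; lia.
  case: (k =P i) => [_|hne].
    apply/negP => /eqP h0; move: (Y_sup Hij Hj); rewrite h0 subset0 => /eqP e.
    by move: (H1 i (leq_ltn_trans Hij Hj)); rewrite e eqxx.
  apply: H1; lia.
- move=> k l hkl hl; apply/setP => x; rewrite inE in_set0.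
  apply/negP => /andP [hxk hxl].
  have [m1 [hm1 hx1 c1]] := G k x (ltn_trans hkl hl) hxk.
  have [m2 [hm2 hx2 c2]] := G l x hl hxl.
  have lt : m1 < m2 by lia.
  have := H2 m1 m2 lt hm2; move/setP/(_ x); by rewrite inE hx1 hx2 in_set0.
- rewrite -H3 /merge_blocks U_cat /= U_cons.
  rewrite -{4}(cat_take_drop i p) U_cat.
  rewrite -{2}(cat_take_drop (j - i).+1 (drop i p)) U_cat drop_drop.
  by have -> : (j - i).+1 + i = j.+1 by lia.
- move=> k; rewrite size_merge // => hk; rewrite nth_merge //.
  case: ltnP => hki.
    rewrite /merge_blocks takel_cat ?size_takel ?take_takel; try lia.
    apply: H4; lia.
  case: (k =P i) => [ek|hne].
    subst k; rewrite /merge_blocks takel_cat ?size_takel; try lia.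
    rewrite take_oversize ?size_takel; try lia.
    have hs : i + (j - i) < size p by lia.
    exact: (@merged_Mrel A p i j Hij Hj S step (j - i) hs H4).
  rewrite /merge_blocks take_cat size_takel; last lia.
  rewrite ltnNge hki /=.
  have -> : k - i = (k - i - 1).+1 by lia.
  rewrite /= U_cat U_cons setUA.
  have -> : k + (j - i) = i + ((j - i).+1 + (k - i - 1)) by lia.
  have E : take (i + ((j - i).+1 + (k - i - 1))) p = take i p ++ take (j - i).+1 (drop i p) ++ take (k - i - 1) (drop j.+1 p).
    rewrite takeD takeD drop_drop.
    by have -> : (j - i).+1 + i = j.+1 by lia.
  rewrite -!U_cat -catA -E; apply: H4; lia.
Qed.
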